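(* Let $s\ge 2$ be an even constant and $\epsilon$ a constant with $0<\epsilon<1/(2s-1)$. The $(1+1)$~IA$^{hyp}$ finds an optimal solution of any instance of the class $G^*_\epsilon$ (with $n$ even) in $O(n^2)$ expected fitness function evaluations.
   Context: Partition problem: an instance consists of $n$ jobs with positive processing times $p_1,\dots,p_n$. A solution is $x\in\{0,1\}^n$ (job $i$ on machine $M_1$ if $x_i=0$, on $M_2$ if $x_i=1$), with makespan $f(x)=\max\{\sum_i p_ix_i,\sum_i p_i(1-x_i)\}$ to be minimised. The class $G^*_\epsilon$: instances with an even number $n$ of jobs, an even number $s=\Theta(1)$ of large jobs, and processing times $p_i=\frac{1}{2s-1}-\frac{\epsilon}{2s}$ for $i\le s$ and $p_i=\frac{s-1}{n-s}\left(\frac{1}{2s-1}+\frac{\epsilon}{2(s-1)}\right)$ for $s<i\le n$, where $0<\epsilon<1/(2s-1)$ is an arbitrarily small constant. The $(1+1)$~IA$^{hyp}$ (minimisation): initialise $x$ uniformly at random and evaluate it. In each iteration: $y:=x$, $F:=\{1,\dots,n\}$; while $F\ne\emptyset$ and $f(y)\ge f(x)$: pick $i\in F$ uniformly at random, remove it from $F$, flip $y_i$, evaluate $f(y)$. Then if $f(y)\le f(x)$ set $x:=y$. Asymptotics are as $n\to\infty$. *)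

(* Defs.v *)
From HB Require Import structures.
From mathcomp Require Import all_boot all_order all_algebra all_fingroup.
From mathcomp Require Import reals.
Set Implicit Arguments. Unset Strict Implicit. Unset Printing Implicit Defensive.
Import Order.TTheory GRing.Theory Num.Theory.
Local Open Scope ring_scope.

(* Processing times of the class G*_eps (jobs indexed 0..n-1; job i is one of
   the s large jobs iff i < s, i.e. paper index i+1 <= s). *)
Definition ptime {R : realType} (n s : nat) (eps : R) (i : 'I_n) : R :=
  if (i < s)%N then 1 / (2 * s%:R - 1) - eps / (2 * s%:R)
  else (s%:R - 1) / (n%:R - s%:R) * (1 / (2 * s%:R - 1) + eps / (2 * (s%:R - 1))).

Arguments ptime {R} n s eps i.

(* x i = true  <->  job i on M2. *)
Definition makespan {R : realType} {n : nat} (p : 'I_n -> R)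
  (x : {ffun 'I_n -> bool}) : R :=
  Num.max (\sum_(i | x i) p i) (\sum_(i | ~~ x i) p i).

Definition is_optimal {R : realType} {n : nat} (f : {ffun 'I_n -> bool} -> R)
  (x : {ffun 'I_n -> bool}) : bool := [forall y, f x <= f y].

(* The hypermutation picks positions uniformly without replacement; this is
   modelled by a uniform random permutation sigma: the k-th picked position is
   sigma (k-1). *)
Definition flipped {n : nat} (x : {ffun 'I_n -> bool}) (sigma : {perm 'I_n})
  (k : nat) : {ffun 'I_n -> bool} :=
  [ffun i => x i (+) ((sigma^-1)%g i < k)%N].

(* Number of evaluations performed by the hypermutation: the first k in
   1..n with f(y_k) < f(x), or n if there is none. *)
Definition stop_index {R : realType} {n : nat} (f : {ffun 'I_n -> bool} -> R)
  (x : {ffun 'I_n -> bool}) (sigma : {perm 'I_n}) : nat :=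
  let ks := iota 1 n in
  nth n ks (find (fun k => f (flipped x sigma k) < f x) ks).

Definition hyp_next {R : realType} {n : nat} (f : {ffun 'I_n -> bool} -> R)
  (x : {ffun 'I_n -> bool}) (sigma : {perm 'I_n}) : {ffun 'I_n -> bool} :=
  let y := flipped x sigma (stop_index f x sigma) in
  if f y <= f x then y else x.

(* Expected number of fitness evaluations, counted within the first k
   iterations, until the current solution is optimal, starting from x.
   Its supremum over k is the expected optimisation time from x. *)
Fixpoint trunc_time {R : realType} {n : nat} (f : {ffun 'I_n -> bool} -> R)
  (k : nat) (x : {ffun 'I_n -> bool}) : R :=
  match k with
  | 0 => 0
  | k'.+1 =>
    if is_optimal f x then 0
    else (#|{perm 'I_n}|%:R)^-1 *
         \sum_(sigma : {perm 'I_n})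
            ((stop_index f x sigma)%:R + trunc_time f k' (hyp_next f x sigma))
  end.

(* Including the initial evaluation of the uniformly random initial x. *)
Definition expected_time_trunc {R : realType} {n : nat}
  (f : {ffun 'I_n -> bool} -> R) (k : nat) : R :=
  1 + ((2 ^ n)%:R)^-1 * \sum_(x : {ffun 'I_n -> bool}) trunc_time f k x.

(* Main.v *)
Require Import Defs.
From HB Require Import structures.
From mathcomp Require Import all_boot all_order all_algebra all_fingroup.
From mathcomp Require Import reals.
From mathcomp.algebra_tactics Require Import ring lra.
From mathcomp Require Import zify.
Import Order.TTheory GRing.Theory Num.Theory.

Set Implicit Arguments. Unset Strict Implicit. Unset Printing Implicit Defensive.

Section Swap.
Variable n : nat.
Variable Y : 'I_n -> {set 'I_n}.

Definition Eset (es : seq 'I_n) : {set {perm 'I_n}} :=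
  [set sg : {perm 'I_n} | all (fun e => (sg^-1)%g e \in Y e) es].

Fixpoint bnd (es : seq 'I_n) : nat :=
  match es with [::] => 1 | e :: es' => (#|Y e| - size es') * bnd es' end.

Lemma swap_step e es : uniq (e :: es) ->
  #|Eset es| * (#|Y e| - size es) <= #|Eset (e :: es)| * n.
Proof.
move=> /= /andP [enes ues].
pose Z (sg : {perm 'I_n}) := Y e :\: [set (sg^-1)%g e' | e' in es].
pose D := [set pp : {perm 'I_n} * 'I_n | (pp.1 \in Eset es) && (pp.2 \in Z pp.1)].
have h1 : #|Eset es| * (#|Y e| - size es) <= #|D|.
  rewrite -sum_nat_const -[#|D|]sum1_card.
  have -> : \sum_(i in D) 1 = \sum_(pp | (pp.1 \in Eset es) && (pp.2 \in Z pp.1)) 1.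
    by apply: eq_bigl => pp; rewrite inE.
  rewrite -(pair_big_dep (fun sg => sg \in Eset es) (fun sg p => p \in Z sg) (fun _ _ => 1)) /=.
  apply: leq_sum => sg _; rewrite sum1_card /Z cardsD.
  apply: leq_sub2l; apply: leq_trans (subset_leq_card (subsetIr _ _)) _.
  apply: leq_trans (leq_imset_card _ _) _; exact: card_size.
pose Phi (pp : {perm 'I_n} * 'I_n) := ((tperm ((pp.1^-1)%g e) pp.2 * pp.1)%g, (pp.1^-1)%g e).
have hinj : {in D &, injective Phi}.
  move=> [s1 p1] [s2 p2] _ _ [] /= h q12.
  have hp : p1 = p2.
    have := congr1 (fun g : {perm 'I_n} => (g^-1)%g e) h => /=.
    by rewrite !invMg !permM !tpermV !tpermL.
  subst p2; congr (_, _).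
  by move: h; rewrite q12 => /mulgI.
have h2 : Phi @: D \subset setX (Eset (e :: es)) [set: 'I_n].
  apply/subsetP => z /imsetP [[sg p] hD ->].
  move: hD; rewrite inE /= => /andP [hE hZ].
  rewrite inE /= in_setT andbT inE /=.
  move: hZ; rewrite /Z inE => /andP [hnot hY].
  rewrite invMg tpermV permM tpermL hY /=.
  move: hE; rewrite inE => /allP hall.
  apply/allP => e' he'.
  rewrite permM tpermD; first exact: hall.
    apply/eqP => /(congr1 sg); rewrite !permKV => ee.
    by move: enes; rewrite ee he'.
  apply: contra hnot => /eqP ->; apply/imsetP; exists e' => //.
apply: leq_trans h1 _.
rewrite -(card_in_imset hinj).
apply: leq_trans (subset_leq_card h2) _.
by rewrite cardsX cardsT card_ord.
Qed.

Lemma swap_bound es : uniq es -> n`! * bnd es <= #|Eset es| * n ^ size es.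
Proof.
elim: es => [|e es IH] /=.
  move=> _; rewrite muln1 expn0 muln1.
  rewrite -card_Sn; apply: subset_leq_card; apply/subsetP => sg _; by rewrite inE.
move=> /andP [enes ues].
have := swap_step (e := e) (es := es); rewrite /= enes ues => /(_ isT) hs.
rewrite expnS mulnCA.
apply: leq_trans (leq_mul (leqnn (#|Y e| - size es)) (IH ues)) _.
rewrite mulnA [_ * #|Eset es|]mulnC.
apply: leq_trans (leq_mul hs (leqnn (n ^ size es))) _.
by rewrite mulnA.
Qed.

End Swap.

Unset Implicit Arguments. Set Strict Implicit.
Local Open Scope ring_scope.

Lemma int_ivt_up (D : nat -> int) lo hi (b : int) : (lo <= hi)%N ->
  (forall t, (lo <= t < hi)%N -> D t.+1 <= D t + 1) ->
  D lo <= b -> b <= D hi -> exists t, (lo <= t <= hi)%N /\ D t = b.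
Proof.
move=> lohi hstep hlo hhi.
have ex : exists t, (lo <= t)%N && (b <= D t) by exists hi; rewrite lohi hhi.
case: (ex_minnP ex) => t /andP [ht1 ht2] hmin.
have thi : (t <= hi)%N by apply: hmin; rewrite lohi hhi.
exists t; split; first by rewrite ht1 thi.
case: (ltngtP lo t) => [lot | tlo | elo]; last first.
- by subst t; apply/eqP; rewrite eq_le hlo ht2.
- by move: ht1; rewrite leqNgt tlo.
case: t lot ht1 ht2 hmin thi => [//|t] lot ht1 ht2 hmin thi.
have lt : (lo <= t)%N by [].
have hDt : D t < b.
  rewrite ltNge; apply/negP => hb.
  by have := hmin t; rewrite lt hb => /(_ isT); rewrite ltnn.
have := hstep t; rewrite lt thi => /(_ isT) => hs.
apply/eqP; rewrite eq_le ht2 andbT; lia.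
Qed.

Lemma int_ivt_down (D : nat -> int) lo hi (b : int) : (lo <= hi)%N ->
  (forall t, (lo <= t < hi)%N -> D t - 1 <= D t.+1) ->
  b <= D lo -> D hi <= b -> exists t, (lo <= t <= hi)%N /\ D t = b.
Proof.
move=> lohi hstep hlo hhi.
have [t [ht e]] := @int_ivt_up (fun t => - D t) lo hi (- b) lohi
  (fun t h => ltac:(have := hstep t h; lia)) (ltac:(lia)) (ltac:(lia)).
by exists t; split => //; lia.
Qed.

Lemma subset_card_ex (T : finType) (B : {set T}) k : (k <= #|B|)%N ->
  exists A : {set T}, A \subset B /\ #|A| = k.
Proof.
move=> hk.
exists [set x in take k (enum B)]; split.
  apply/subsetP => x; rewrite inE => /mem_take; by rewrite mem_enum.
have u := take_uniq k (enum_uniq (mem B)).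
by rewrite cardsE; move/card_uniqP: u => ->; rewrite size_takel // -cardE.
Qed.

Lemma card_lt_ord n m : (m <= n)%N -> #|[set i : 'I_n | (i < m)%N]| = m.
Proof.
move=> mn.
have -> : [set i : 'I_n | (i < m)%N] = [set widen_ord mn j | j in 'I_m].
  apply/setP => i; rewrite inE; apply/idP/imsetP.
    move=> his; exists (Ordinal his) => //; exact: val_inj.
  by move=> [j _ ->] /=.
rewrite card_imset ?card_ord //; move=> a b [] h; exact: val_inj.
Qed.

Lemma card_ge_ord n m : (m <= n)%N -> #|[set i : 'I_n | (n - m <= i)%N]| = m.
Proof.
move=> mn.
have := cardsC [set i : 'I_n | (i < n - m)%N]; rewrite card_lt_ord ?leq_subr // card_ord => h.
have -> : [set i : 'I_n | (n - m <= i)%N] = ~: [set i : 'I_n | (i < n - m)%N].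
  by apply/setP => i; rewrite !inE -leqNgt.
lia.
Qed.

Lemma leq_expn (m k e : nat) : (m <= k)%N -> (m ^ e <= k ^ e)%N.
Proof. by move=> h; elim: e => // e IH; rewrite !expnS leq_mul. Qed.

Lemma bnd_lower n (Y : 'I_n -> {set 'I_n}) (es : seq 'I_n) P :
  (forall e, e \in es -> (P <= #|Y e|)%N) -> ((P - size es) ^ size es <= bnd Y es)%N.
Proof.
elim: es => [|e es IH] //= hY.
rewrite expnS; apply: leq_mul.
  by apply: leq_sub; [apply: hY; rewrite inE eqxx | apply: leqnSn].
apply: leq_trans (IH (fun e' he' => hY e' (ltac:(by rewrite inE he' orbT)))).
by apply: leq_expn; apply: leq_sub2l; apply: leqnSn.
Qed.

Lemma sum_constP (V : nmodType) (I : finType) (P : pred I) (c : V) :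
  \sum_(i | P i) c = c *+ #|[set i | P i]|.
Proof. rewrite -sumr_const; apply: eq_bigl => i; by rewrite inE. Qed.

Set Implicit Arguments. Unset Strict Implicit.

Lemma first_cross (R : realType) (v : nat -> R) m (d : R) :
  v 0%N = 0 -> 0 < v m -> (forall k, (k < m)%N -> v k.+1 <= v k + d) ->
  exists k, [/\ (0 < k <= m)%N, 0 < v k & v k <= d].
Proof.
move=> v0 vm hstep.
have ex : exists k, 0 < v k by exists m.
case: (ex_minnP ex) => k hk hmin.
have km : (k <= m)%N by apply: hmin.
case: k hk hmin km => [|k] hk hmin km; first by move: hk; rewrite v0 ltxx.
exists k.+1; split => //.
have hk0 : v k <= 0.
  rewrite leNgt; apply/negP => /hmin; by rewrite ltnn.
have := hstep k km; lra.
Qed.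

Section Reals.
Variable R : realType.
Variables (n s : nat) (eps : R).
Hypothesis hs2 : (2 <= s)%N.
Hypothesis heps0 : 0 < eps.
Hypothesis heps1 : eps < 1 / (2 * s%:R - 1).
Hypothesis hn : (2 * s <= n)%N.

Definition pL : R := 1 / (2 * s%:R - 1) - eps / (2 * s%:R).
Definition pS : R := (s%:R - 1) / (n%:R - s%:R) * (1 / (2 * s%:R - 1) + eps / (2 * (s%:R - 1))).

Let S := s%:R : R.
Let N := n%:R : R.

Lemma S2 : 2 <= S.
Proof. by rewrite /S ler_nat. Qed.

Lemma NS : 2 * S <= N.
Proof. by rewrite /S /N -natrM ler_nat. Qed.

Let u := 1 / (2 * S - 1).
Lemma u_eq : u * (2 * S - 1) = 1.
Proof. rewrite /u mul1r mulVf // gt_eqF //; have := S2; lra. Qed.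
Lemma u_pos : 0 < u.
Proof. rewrite /u divr_gt0 //; have := S2; lra. Qed.

Lemma pL_gt : 1 / (2 * S) < pL.
Proof.
rewrite /pL -/S -/u.
have hS := S2.
have h2S : 0 < 2 * S by lra.
have e1 : eps / (2 * S) < u / (2 * S) by rewrite ltr_pM2r ?invr_gt0.
have e2 : u - u / (2 * S) = 1 / (2 * S).
  have := u_eq; move=> ue.
  rewrite /u; field; apply/andP; split; apply/eqP; lra.
lra.
Qed.

Lemma pL_pos : 0 < pL.
Proof. apply: lt_trans pL_gt; rewrite divr_gt0 //; have := S2; lra. Qed.

Lemma Su_eq : (S - 1) * u = (1 - u) / 2.
Proof. rewrite /u; field; apply/eqP; have := S2; lra. Qed.

Lemma pS_eq : pS * (N - S) = (S - 1) * u + eps / 2.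
Proof.
rewrite /pS -/S -/N -/u; have := S2; have := NS => h1 h2.
field; apply/andP; split; apply/eqP; lra.
Qed.

Lemma pS_pos : 0 < pS.
Proof.
rewrite /pS -/S -/N -/u; have := S2; have := NS; have := u_pos => h1 h2 h3.
apply: mulr_gt0; first by rewrite divr_gt0; lra.
apply: addr_gt0 => //; rewrite divr_gt0 //; lra.
Qed.

Lemma pS_lt : pS * (N - S) < 1 / 2.
Proof. rewrite pS_eq Su_eq; have := u_pos; have h := heps1; rewrite -/S -/u in h; lra. Qed.

Lemma tot_eq : S * pL + (N - S) * pS = 1.
Proof.
rewrite [(N - S) * pS]mulrC pS_eq /pL -/S -/u.
have := u_eq; have := S2 => h1 h2.
have -> : S * (u - eps / (2 * S)) = S * u - eps / 2.
  field; apply/eqP; lra.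
lra.
Qed.

Lemma pS_lt_pL : pS < pL.
Proof.
have h1 := pS_lt; have h2 := NS; have h3 := S2; have h4 := pS_pos; have h5 := pL_gt.
have h6 : pS * S <= pS * (N - S) by rewrite ler_pM2l //; lra.
have h7 : 1 / (2 * S) = (1/2) / S by field; apply/eqP; lra.
rewrite h7 in h5.
have h8 : pS < (1/2) / S by rewrite ltr_pdivlMr; lra.
lra.
Qed.

Local Notation p := (ptime n s eps).

Lemma p_large (i : 'I_n) : (i < s)%N -> p i = pL.
Proof. by rewrite /ptime => ->. Qed.
Lemma p_small (i : 'I_n) : ~~ (i < s)%N -> p i = pS.
Proof. by rewrite /ptime => /negbTE ->. Qed.

Lemma sum_const_pred (I : finType) (P : pred I) (c : R) :
  \sum_(i | P i) c = #|[set i | P i]|%:R * c.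
Proof.
rewrite mulr_natl -sumr_const; apply: eq_bigl => i; by rewrite inE.
Qed.

Lemma sum_split (P : pred 'I_n) : \sum_(i | P i) p i =
  #|[set i | P i && (i < s)%N]|%:R * pL + #|[set i | P i && ~~ (i < s)%N]|%:R * pS.
Proof.
rewrite (bigID (fun i : 'I_n => (i < s)%N)) /=.
rewrite (eq_bigr (fun _ => pL)); last by move=> i /andP [_ h]; rewrite p_large.
rewrite [X in _ + X](eq_bigr (fun _ => pS)); last by move=> i /andP [_ h]; rewrite p_small.
by rewrite !sum_const_pred.
Qed.

Lemma sleqn : (s <= n)%N.
Proof. by apply: leq_trans hn; rewrite leq_pmull. Qed.

Lemma card_large : #|[set i : 'I_n | (i < s)%N]| = s.
Proof.
have -> : [set i : 'I_n | (i < s)%N] = [set widen_ord sleqn j | j in 'I_s].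
  apply/setP => i; rewrite inE; apply/idP/imsetP.
    move=> his; exists (Ordinal his) => //; exact: val_inj.
  by move=> [j _ ->] /=.
rewrite card_imset ?card_ord //; move=> a b [] h; exact: val_inj.
Qed.

Lemma card_small : #|[set i : 'I_n | ~~ (i < s)%N]| = (n - s)%N.
Proof.
have := cardsC [set i : 'I_n | (i < s)%N]; rewrite card_large card_ord => h.
have -> : [set i : 'I_n | ~~ (i < s)%N] = ~: [set i : 'I_n | (i < s)%N].
  by apply/setP => i; rewrite !inE.
have := sleqn; lia.
Qed.

Lemma total : \sum_(i : 'I_n) p i = 1.
Proof.
rewrite sum_split.
have -> : [set i : 'I_n | true && (i < s)%N] = [set i : 'I_n | (i < s)%N].
  by apply/setP => i; rewrite !inE.
have -> : [set i : 'I_n | true && ~~(i < s)%N] = [set i : 'I_n | ~~(i < s)%N].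
  by apply/setP => i; rewrite !inE.
rewrite card_large card_small natrB ?sleqn //.
exact: tot_eq.
Qed.

Definition Ssum (x : {ffun 'I_n -> bool}) : R := \sum_(i | x i) p i.

Lemma sum_neg (x : {ffun 'I_n -> bool}) : \sum_(i | ~~ x i) p i = 1 - Ssum x.
Proof.
rewrite -total (bigID (fun i => x i) predT) /= /Ssum.
by rewrite addrC addrK.
Qed.

Lemma f_S (x : {ffun 'I_n -> bool}) : makespan p x = Num.max (Ssum x) (1 - Ssum x).
Proof. by rewrite /makespan sum_neg. Qed.



Local Notation f := (makespan p).

Definition cpl (x : {ffun 'I_n -> bool}) : {ffun 'I_n -> bool} := [ffun i => ~~ x i].

Definition w (x : {ffun 'I_n -> bool}) (e : 'I_n) : R := if x e then p e else - p e.

Definition V x (sg : {perm 'I_n}) k : R := \sum_(t < n | (t < k)%N) w x (sg t).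

Lemma V_reindex x sg k : V x sg k = \sum_(i | ((sg^-1)%g i < k)%N) w x i.
Proof.
rewrite /V (reindex_inj (h := sg^-1%g) (@perm_inj _ _)) /=.
by apply: eq_bigr => t _; rewrite permKV.
Qed.

Lemma S_flipped x sg k : Ssum (flipped x sg k) = Ssum x - V x sg k.
Proof.
rewrite V_reindex /Ssum.
rewrite (eq_bigl (fun i => flipped x sg k i)) //.
rewrite big_mkcond [X in _ = X - _]big_mkcond [X in _ = _ - X]big_mkcond /=.
rewrite -sumrB; apply: eq_bigr => i _; rewrite /flipped ffunE /w.
by case: (x i); case: (_ < k)%N => /=; rewrite ?subr0 ?subrr ?sub0r ?opprK.
Qed.

Lemma V0 x sg : V x sg 0 = 0.
Proof. by rewrite /V big_pred0. Qed.

Lemma Vn x sg : V x sg n = 2 * Ssum x - 1.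
Proof.
rewrite V_reindex (eq_bigl (fun _ => true)); last by move=> i; rewrite ltn_ord.
rewrite (bigID (fun i => x i)) /=.
rewrite (eq_bigr (fun i => p i)); last by move=> i; rewrite /w; case: (x i).
rewrite [X in _ + X](eq_bigr (fun i => - p i)); last first.
  by move=> i; rewrite /w; case: (x i).
rewrite sumrN (eq_bigl (fun i => x i)) // [X in _ - X](eq_bigl (fun i => ~~ x i)) //.
rewrite sum_neg; rewrite /Ssum; lra.
Qed.

Lemma VS x sg k (hk : (k < n)%N) : V x sg k.+1 = V x sg k + w x (sg (Ordinal hk)).
Proof.
rewrite /V (bigD1 (Ordinal hk)) /=; last by [].
rewrite addrC; congr (_ + _); apply: eq_bigl => t.
by rewrite ltnS -val_eqE /= andbC -ltn_neqAle.
Qed.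

Lemma w_le x e : w x e <= pL.
Proof.
have h1 := pL_pos; have h2 := pS_pos; have h3 := pS_lt_pL.
rewrite /w; case: (x e); (case hes: (e < s)%N; [rewrite p_large // | rewrite p_small ?hes //]); lra.
Qed.

Definition Iset x := [set sg : {perm 'I_n} |
   has (fun k => f (flipped x sg k) < f x) (iota 1 n)].

Lemma in_Iset x sg k : (0 < k <= n)%N -> f (flipped x sg k) < f x -> sg \in Iset x.
Proof.
move=> /andP [k0 kn] h; rewrite inE; apply/hasP; exists k => //.
by rewrite mem_iota k0 add1n ltnS.
Qed.

Lemma improve x sg k : 1/2 < Ssum x -> 0 < V x sg k -> V x sg k < 2 * Ssum x - 1 ->
  f (flipped x sg k) < f x.
Proof.
move=> h1 h2 h3; rewrite !f_S S_flipped.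
rewrite (max_l (x := Ssum x)); last by lra.
rewrite gt_max; apply/andP; split; lra.
Qed.

Lemma case1 x sg : 1/2 < Ssum x -> pL < 2 * Ssum x - 1 -> sg \in Iset x.
Proof.
move=> h1 h2.
have [k [hk hv1 hv2]] := first_cross (v := V x sg) (m := n) (d := pL) (V0 x sg)
  (ltac:(rewrite Vn; lra)) (fun k hk => ltac:(rewrite (VS _ _ hk) lerD2l; exact: w_le)).
apply: (in_Iset (k := k)) => //; apply: improve => //; lra.
Qed.


Lemma f_cpl x : f (cpl x) = f x.
Proof.
rewrite /makespan maxC; congr Num.max; apply: eq_bigl => i; by rewrite /cpl ffunE ?negbK.
Qed.

Lemma flipped_n x sg : flipped x sg n = cpl x.
Proof. by apply/ffunP => i; rewrite /flipped /cpl !ffunE ltn_ord addbT. Qed.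

Lemma stop_le x sg : (stop_index f x sg <= n)%N.
Proof.
rewrite /stop_index; case: (boolP (has (fun k => f (flipped x sg k) < f x) (iota 1 n))) => h.
  have hf : (find (fun k => (f (flipped x sg k) < f x)%R) (iota 1 n) < n)%N.
    by rewrite -[X in (_ < X)%N](size_iota 1 n) -has_find.
  by rewrite nth_iota // add1n.
by rewrite nth_default // (hasNfind h) size_iota.
Qed.

Lemma next_improve x sg : sg \in Iset x -> f (hyp_next f x sg) < f x.
Proof.
rewrite inE => h.
have hlt : f (flipped x sg (stop_index f x sg)) < f x := nth_find n h.
by rewrite /hyp_next (ltW hlt).
Qed.

Lemma next_same x sg : sg \notin Iset x -> f (hyp_next f x sg) = f x.
Proof.
rewrite inE => h.
have hs : stop_index f x sg = n by rewrite /stop_index (hasNfind h) nth_default // size_iota.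
by rewrite /hyp_next hs flipped_n f_cpl lexx f_cpl.
Qed.

Lemma Iset_cpl x : Iset (cpl x) = Iset x.
Proof.
apply/setP => sg; rewrite !inE f_cpl; apply: eq_has => k /=.
have -> : flipped (cpl x) sg k = cpl (flipped x sg k).
  by apply/ffunP => i; rewrite /flipped /cpl !ffunE addNb.
by rewrite f_cpl.
Qed.


Hypothesis hsev : ~~ odd s.
Hypothesis hnev : ~~ odd n.

Definition acnt (x : {ffun 'I_n -> bool}) := #|[set i : 'I_n | x i && (i < s)%N]|.
Definition bcnt (x : {ffun 'I_n -> bool}) := #|[set i : 'I_n | x i && ~~ (i < s)%N]|.
Definition hh := ((n - s)./2)%N.
Definition hs := (s./2)%N.

Lemma Ssum_ab x : Ssum x = (acnt x)%:R * pL + (bcnt x)%:R * pS.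
Proof. by rewrite /Ssum sum_split. Qed.

Lemma hs2e : (hs * 2 = s)%N.
Proof. by rewrite /hs -{2}(even_halfK hsev) muln2. Qed.

Lemma hh2e : (hh * 2 = n - s)%N.
Proof.
have : ~~ odd (n - s) by rewrite oddB ?sleqn // (negbTE hnev) (negbTE hsev).
by move=> h; rewrite /hh -{2}(even_halfK h) muln2.
Qed.

Lemma d0_eq x : Ssum x - 1/2 = ((acnt x)%:R - hs%:R) * pL + ((bcnt x)%:R - hh%:R) * pS.
Proof.
have t : hs%:R * pL + hh%:R * pS = 1/2 :> R.
  have := tot_eq; rewrite -/S -/N.
  have e1 : S = hs%:R * 2 by rewrite /S -hs2e natrM.
  have e2 : N - S = hh%:R * 2 by rewrite /N /S -natrB ?sleqn // -hh2e natrM.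
  rewrite e2 e1 => h; apply: (mulIf (x := 2)); first by apply/eqP; lra.
  rewrite mulrDl; transitivity (hs%:R * 2 * pL + hh%:R * 2 * pS); [ring | by rewrite h; field].
rewrite Ssum_ab -t; ring.
Qed.

Lemma reidx (V : nmodType) (g : 'I_n -> V) (sg : {perm 'I_n}) t :
  \sum_(u < n | (u < t)%N) g (sg u) = \sum_(i | ((sg^-1)%g i < t)%N) g i.
Proof.
rewrite (reindex_inj (h := sg^-1%g) (@perm_inj _ _)) /=.
by apply: eq_bigr => j _; rewrite permKV.
Qed.

Definition cS x (e : 'I_n) : int := if (e < s)%N then 0 else (if x e then 1 else -1).
Definition wl x (e : 'I_n) : R := if (e < s)%N then w x e else 0.

Lemma w_split x e : w x e = wl x e + pS * (cS x e)%:~R.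
Proof.
rewrite /wl /cS /w; case h: (e < s)%N; first by rewrite mulr0 addr0.
by rewrite p_small ?h //; case: (x e); rewrite add0r /= ?mulr1 // mulrN1.
Qed.

Definition Dt x sg t : int := \sum_(u < n | (u < t)%N) cS x (sg u).
Definition Lt x sg t : R := \sum_(u < n | (u < t)%N) wl x (sg u).

Lemma V_split x sg t : V x sg t = Lt x sg t + pS * (Dt x sg t)%:~R.
Proof.
rewrite /V /Lt /Dt (eq_bigr _ (fun j _ => w_split x (sg j))) big_split /=.
by rewrite rmorph_sum mulr_sumr.
Qed.

Lemma Dt0 x sg : Dt x sg 0 = 0.
Proof. by rewrite /Dt big_pred0. Qed.

Lemma DtS x sg k (hk : (k < n)%N) : Dt x sg k.+1 = Dt x sg k + cS x (sg (Ordinal hk)).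
Proof.
rewrite /Dt (bigD1 (Ordinal hk)) /=; last by [].
rewrite addrC; congr (_ + _); apply: eq_bigl => t.
by rewrite ltnS -val_eqE /= andbC -ltn_neqAle.
Qed.

Lemma cS_bound x e : -1 <= cS x e <= 1.
Proof. by rewrite /cS; case: ifP => _ //; case: (x e). Qed.

Lemma Dt_tele x sg t j : (t + j <= n)%N -> - (j%:Z) <= Dt x sg (t + j) - Dt x sg t <= j%:Z.
Proof.
elim: j => [|j IH] h; first by rewrite addn0 subrr.
have hj : (t + j < n)%N by rewrite addnS in h.
have := IH (ltnW hj); rewrite addnS (DtS _ _ hj).
have := cS_bound x (sg (Ordinal hj)); lia.
Qed.

Lemma card_small_split x : (bcnt x + #|[set i : 'I_n | ~~ x i && ~~ (i < s)%N]| = n - s)%N.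
Proof.
rewrite -card_small -(cardsID [set i : 'I_n | x i] [set i : 'I_n | ~~ (i < s)%N]) /bcnt.
have -> : [set i : 'I_n | x i && ~~ (i < s)%N] = [set i : 'I_n | ~~ (i < s)%N] :&: [set i | x i].
  by apply/setP => i; rewrite !inE; case: (x i); case: (i < s)%N.
have -> : [set i : 'I_n | ~~ x i && ~~ (i < s)%N] = [set i : 'I_n | ~~ (i < s)%N] :\: [set i | x i].
  by apply/setP => i; rewrite !inE; case: (x i); case: (i < s)%N.
by [].
Qed.

Lemma Dtn (x : {ffun 'I_n -> bool}) (sg : {perm 'I_n}) : Dt x sg n = 2 * ((bcnt x)%:Z - hh%:Z).
Proof.
rewrite /Dt (eq_bigl (fun j : 'I_n => true)); last by move=> j; rewrite ltn_ord.
rewrite (reindex_inj (h := sg^-1%g) (@perm_inj _ _)) /=.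
rewrite (eq_bigr (fun i => cS x i)); last by move=> i _; rewrite permKV.
rewrite (bigID (fun i : 'I_n => (i < s)%N)) /= big1; last first.
  by move=> i; rewrite /cS; case: (i < s)%N.
rewrite add0r (bigID (fun i : 'I_n => x i)) /=.
rewrite (eq_bigr (fun _ => 1)); last first.
  by move=> i; rewrite /cS; case: (i < s)%N; case: (x i).
rewrite [X in _ + X](eq_bigr (fun _ => -1)); last first.
  by move=> i; rewrite /cS; case: (i < s)%N; case: (x i).
rewrite !sum_constP.
have e1 : #|[set i : 'I_n | ~~ (i < s)%N && x i]| = bcnt x.
  by apply: eq_card => i; rewrite !inE /=; case: (x i); case: (i < s)%N.
have e2 : #|[set i : 'I_n | ~~ (i < s)%N && ~~ x i]| =
          #|[set i : 'I_n | ~~ x i && ~~ (i < s)%N]|.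
  by apply: eq_card => i; rewrite !inE /=; case: (x i); case: (i < s)%N.
rewrite e1 e2.
have := card_small_split x; have := hh2e; have := sleqn.
move: (#|_|) => c; move: (bcnt x) => bb.
rewrite -mulr_natr !natz; lia.
Qed.


Hypothesis hn0 : (8 * s * (s + 1) <= n)%N.

Definition P0 := (n %/ (4 * s))%N.

Lemma P0_facts : [/\ (4 * s * P0 <= n)%N, (n <= 8 * s * (P0 - s))%N, (s < P0)%N & (2 * P0 <= n)%N].
Proof.
have s0 : (0 < 4 * s)%N by lia.
have e := divn_eq n (4 * s); have r := ltn_pmod n s0.
rewrite /P0; move: (n %/ (4 * s))%N (n %% (4 * s))%N e r => q rr e r.
have hq : (2 * s + 2 <= q)%N by nia.
split; nia.
Qed.

Lemma P0pS : P0%:R * pS <= pL / 2.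
Proof.
have [h1 _ _ _] := P0_facts.
have hS := S2; have hN := NS; have hp := pS_pos; have hlt := pS_lt; have hg := pL_gt.
have h1r : 4 * S * P0%:R <= N by rewrite /S /N -!natrM ler_nat.
have a1 : (4 * S * P0%:R) * pS <= N * pS by rewrite ler_pM2r.
have a2 : N * pS <= 2 * (pS * (N - S)).
  have -> : 2 * (pS * (N - S)) = (2 * (N - S)) * pS by ring.
  rewrite ler_pM2r //; lra.
have a3 : P0%:R * pS < 1 / (4 * S).
  rewrite ltr_pdivlMr; last by lra.
  have -> : P0%:R * pS * (4 * S) = (4 * S * P0%:R) * pS by ring.
  lra.
have a4 : 1 / (4 * S) = (1 / (2 * S)) / 2 by field; apply/eqP; lra.
lra.
Qed.

Lemma card_large_split x :
  (acnt x + #|[set i : 'I_n | ~~ x i && (i < s)%N]| = s)%N.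
Proof.
rewrite -[X in _ = X]card_large -(cardsID [set i : 'I_n | x i] [set i : 'I_n | (i < s)%N]) /acnt.
have -> : [set i : 'I_n | x i && (i < s)%N] = [set i : 'I_n | (i < s)%N] :&: [set i | x i].
  by apply/setP => i; rewrite !inE; case: (x i); case: (i < s)%N.
have -> : [set i : 'I_n | ~~ x i && (i < s)%N] = [set i : 'I_n | (i < s)%N] :\: [set i | x i].
  by apply/setP => i; rewrite !inE; case: (x i); case: (i < s)%N.
by [].
Qed.

Lemma case2 x : 1/2 < Ssum x -> ((bcnt x + P0 <= hh)%N \/ (hh + P0 <= bcnt x)%N) ->
  (n`! <= (8 * s) ^ s * #|Iset x|)%N.
Proof.
move=> hS12 hb.
have [hP1 hP2 hP3 hP4] := P0_facts.
have hssum := card_large_split x.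
have hhs : (hs <= s)%N by rewrite -hs2e; lia.
have [A [hA1 hA2 hA3]] : exists A : {set 'I_n},
   [/\ (forall i, i \in A -> (i < s)%N), (forall i, i \in A -> x i = (hs <= acnt x)%N) &
       #|A| = if (hs <= acnt x)%N then (acnt x - hs)%N else (hs - acnt x)%N].
  case: (leqP hs (acnt x)) => h.
    have [A [hA hc]] := @subset_card_ex _ [set i : 'I_n | x i && (i < s)%N] (acnt x - hs)
        (ltac:(rewrite /acnt; lia)).
    exists A; split => //.
      by move=> i /(subsetP hA); rewrite inE => /andP [].
    by move=> i /(subsetP hA); rewrite inE => /andP [].
  have [A [hA hc]] := @subset_card_ex _ [set i : 'I_n | ~~ x i && (i < s)%N] (hs - acnt x)
        (ltac:(lia)).
  exists A; split => //.
    by move=> i /(subsetP hA); rewrite inE => /andP [].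
  by move=> i /(subsetP hA); rewrite inE => /andP [/negbTE].
have hLA : \sum_(i in A) wl x i = ((acnt x)%:R - hs%:R) * pL.
  case: (leqP hs (acnt x)) => h.
    rewrite (eq_bigr (fun _ => pL)); last first.
      by move=> i hi; rewrite /wl (hA1 _ hi) /w (hA2 _ hi) h p_large // hA1.
    by rewrite sumr_const hA3 h -[pL *+ _]mulr_natl natrB.
  rewrite (eq_bigr (fun _ => - pL)); last first.
    by move=> i hi; rewrite /wl (hA1 _ hi) /w (hA2 _ hi) leqNgt h p_large // hA1.
  rewrite sumr_const hA3 leqNgt h /= -[(- pL) *+ _]mulr_natl natrB; last by apply: ltnW.
  ring.
pose Yf := fun e : 'I_n => if e \in A then [set t : 'I_n | (t < P0)%N]
                                       else [set t : 'I_n | (n - P0 <= t)%N].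
pose es := enum [set i : 'I_n | (i < s)%N].
have Esub : Eset Yf es \subset Iset x.
  apply/subsetP => sg; rewrite inE => /allP hall.
  have hY : forall i : 'I_n, (i < s)%N -> (sg^-1)%g i \in Yf i.
    by move=> i hi; apply: hall; rewrite mem_enum inE.
  have hL : forall t, (P0 <= t <= n - P0)%N -> Lt x sg t = ((acnt x)%:R - hs%:R) * pL.
    move=> t /andP [t1 t2]; rewrite /Lt reidx -hLA big_mkcond [RHS]big_mkcond.
    apply: eq_bigr => i _.
    case hi: (i < s)%N; last by rewrite /wl hi; case: ifP; case: ifP.
    have := hY i hi; rewrite /Yf; case: ifP => hiA; rewrite inE => hpos.
      by rewrite (leq_trans hpos t1).
    by rewrite ltnNge (leq_trans t2 hpos).
  have lohi : (P0 <= n - P0)%N by lia.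
  have hstep : forall t, (P0 <= t < n - P0)%N ->
      Dt x sg t - 1 <= Dt x sg t.+1 <= Dt x sg t + 1.
    move=> t /andP [_ ht].
    have htn : (t < n)%N by lia.
    rewrite (DtS _ _ htn); have := cS_bound x (sg (Ordinal htn)); lia.
  have tel1 := @Dt_tele x sg 0 P0 (ltac:(lia)).
  have tel2 := @Dt_tele x sg (n - P0) P0 (ltac:(lia)).
  rewrite add0n Dt0 in tel1; rewrite subnK ?Dtn in tel2; last by lia.
  have [t [ht hDt]] : exists t, (P0 <= t <= n - P0)%N /\ Dt x sg t = (bcnt x)%:Z - hh%:Z.
    case: hb => hb.
      apply: (@int_ivt_down (Dt x sg) P0 (n - P0) _ lohi) => [t htt| |]; first by have := hstep t htt; lia.
        by lia.
      by lia.
    apply: (@int_ivt_up (Dt x sg) P0 (n - P0) _ lohi) => [t htt| |]; first by have := hstep t htt; lia.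
      by lia.
    by lia.
  have hV : V x sg t = Ssum x - 1/2.
    by rewrite V_split hL // hDt d0_eq intrB /= [pS * _]mulrC.
  apply: (in_Iset (k := t)); first by apply/andP; split; lia.
  apply: improve => //; rewrite hV; lra.
have hcnt := swap_bound Yf (enum_uniq (mem [set i : 'I_n | (i < s)%N])).
rewrite -/es in hcnt.
have hsz : size es = s by rewrite /es -cardE card_large.
have hbnd := @bnd_lower n Yf es P0
  (fun e _ => ltac:(rewrite /Yf; case: ifP => _; [rewrite card_lt_ord | rewrite card_ge_ord]; lia)).
rewrite hsz in hcnt hbnd.
have hE := subset_leq_card Esub.
have h1 : (n`! * (P0 - s) ^ s <= #|Iset x| * n ^ s)%N.
  apply: leq_trans (leq_mul (leqnn _) hbnd) _.
  apply: leq_trans hcnt _; by rewrite leq_mul2r hE orbT.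
have h2 : (n ^ s <= (8 * s) ^ s * (P0 - s) ^ s)%N by rewrite -expnMn; apply: leq_expn; lia.
have npos : (0 < n ^ s)%N by rewrite expn_gt0; lia.
rewrite -(leq_pmul2r npos).
apply: leq_trans (leq_mul (leqnn _) h2) _.
rewrite mulnA [(n`! * _)%N]mulnC -mulnA.
apply: leq_trans (leq_mul (leqnn _) h1) _.
by rewrite mulnA.
Qed.


Lemma count_first (t0 : 'I_n) (TS : {set 'I_n}) :
  (#|TS| * n`! <= #|[set sg : {perm 'I_n} | sg t0 \in TS]| * n)%N.
Proof.
have e1 : forall e, (n`! <= #|[set sg : {perm 'I_n} | sg t0 == e]| * n)%N.
  move=> e.
  have := @swap_bound n (fun _ => [set t0]) [:: e] isT.
  rewrite /= subn0 cards1 !muln1 expn1.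
  have -> : Eset (fun _ => [set t0]) [:: e] = [set sg : {perm 'I_n} | sg t0 == e]; last exact: id.
  apply/setP => sg; rewrite !inE /= andbT inE.
  by apply/eqP/eqP => [<- | <-]; rewrite ?permKV ?permK.
rewrite -[#|[set sg | _]|]sum1_card (partition_big (fun sg : {perm 'I_n} => sg t0) (mem TS)) /=; last first.
  by move=> sg; rewrite inE.
rewrite big_distrl /= -sum_nat_const.
apply: leq_sum => e he.
apply: leq_trans (e1 e) _; rewrite leq_mul2r; apply/orP; right.
rewrite -sum1_card; apply: eq_leq; apply: eq_bigl => sg; rewrite !inE.
by case: (eqVneq (sg t0) e) => [->|]; rewrite ?he ?andbF ?andbT.
Qed.

Lemma case3 x : 1/2 < Ssum x -> pS < 2 * Ssum x - 1 -> (n <= 4 * bcnt x)%N ->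
  (n`! <= 4 * #|Iset x|)%N.
Proof.
move=> h1 h2 h3.
have n0 : (0 < n)%N by lia.
pose t0 := Ordinal n0.
pose TS := [set i : 'I_n | x i && ~~ (i < s)%N].
have sub : [set sg : {perm 'I_n} | sg t0 \in TS] \subset Iset x.
  apply/subsetP => sg; rewrite inE inE => /andP [hx hs'].
  apply: (in_Iset (k := 1)) => //.
  have hV : V x sg 1 = pS by rewrite (VS _ _ n0) V0 add0r /w hx p_small.
  apply: improve => //; rewrite hV; have := pS_pos; lra.
have hc := count_first t0 TS.
have hsub := subset_leq_card sub.
rewrite -(leq_pmul2r n0).
apply: leq_trans (leq_mul (leqnn _) h3) _.
have hc' : (bcnt x * n`! <= #|Iset x| * n)%N.
  by apply: leq_trans hc _; rewrite leq_mul2r hsub orbT.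
by rewrite mulnCA -mulnA leq_mul2l /= [(n`! * _)%N]mulnC.
Qed.

Definition Kc := ((8 * s) ^ s)%N.

Lemma Kc_ge4 : (4 <= Kc)%N.
Proof.
rewrite /Kc.
have h1 : (4 <= 8 * s)%N by lia.
apply: (leq_trans h1).
have h2 : ((8 * s) ^ 1 <= (8 * s) ^ s)%N by apply: leq_pexp2l; lia.
by rewrite expn1 in h2.
Qed.

Lemma Ssum_cpl x : Ssum (cpl x) = 1 - Ssum x.
Proof. rewrite -sum_neg /Ssum; apply: eq_bigl => i; by rewrite /cpl ffunE. Qed.

Lemma n_le_4b x : (hh < bcnt x)%N -> (n <= 4 * bcnt x)%N.
Proof. move=> h; have := hh2e; have := sleqn; lia. Qed.

Lemma core_pos x : 1/2 < Ssum x -> (n`! <= Kc * #|Iset x|)%N.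
Proof.
move=> h.
have Kpos := Kc_ge4.
case: (ltrP pL (2 * Ssum x - 1)) => hd.
  have -> : Iset x = setT by apply/setP => sg; rewrite in_setT; exact: case1 h hd.
  by rewrite cardsT card_Sn leq_pmull //; lia.
have [hb|hb] : ((bcnt x + P0 <= hh)%N \/ (hh + P0 <= bcnt x)%N) \/
               ((hh < bcnt x + P0)%N /\ (bcnt x < hh + P0)%N).
    by lia.
  exact: case2.
case: hb => hb1 hb2.
have hP := P0pS; have hpS := pS_pos; have hpL := pL_pos.
have hd0 := d0_eq x.
have r1 : 0 < ((bcnt x)%:R + P0%:R - hh%:R) * pS.
  apply: mulr_gt0 => //; rewrite subr_gt0 -natrD ltr_nat; lia.
have r2 : 0 < (hh%:R + P0%:R - (bcnt x)%:R) * pS.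
  apply: mulr_gt0 => //; rewrite subr_gt0 -natrD ltr_nat; lia.
have ha : acnt x = hs.
  case: (ltngtP hs (acnt x)) => // ha.
    have : 0 <= ((acnt x)%:R - hs%:R - 1) * pL.
      apply: mulr_ge0; last by apply: ltW.
      have q : (hs.+1)%:R <= (acnt x)%:R :> R by rewrite ler_nat.
      rewrite -natr1 in q; lra.
    move=> r3; exfalso; lra.
  have : 0 <= (hs%:R - (acnt x)%:R - 1) * pL.
    apply: mulr_ge0; last by apply: ltW.
    have q : ((acnt x).+1)%:R <= hs%:R :> R by rewrite ler_nat.
    rewrite -natr1 in q; lra.
  move=> r3; exfalso; lra.
rewrite ha subrr mul0r add0r in hd0.
have hb3 : (hh < bcnt x)%N.
  rewrite ltnNge; apply/negP => hle.
  have : ((bcnt x)%:R - hh%:R) * pS <= 0.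
    by apply: mulr_le0_ge0; [rewrite subr_le0 ler_nat | apply: ltW].
  lra.
have r4 : pS <= ((bcnt x)%:R - hh%:R) * pS.
  rewrite -{1}(mul1r pS) ler_pM2r //.
  have q : (hh.+1)%:R <= (bcnt x)%:R :> R by rewrite ler_nat.
  rewrite -natr1 in q; lra.
have h2d : pS < 2 * Ssum x - 1 by lra.
apply: leq_trans (case3 h h2d (n_le_4b hb3)) _.
by rewrite leq_mul2r Kpos orbT.
Qed.

Lemma core x : Ssum x != 1/2 -> (n`! <= Kc * #|Iset x|)%N.
Proof.
move=> hne.
case: (ltrP (1/2) (Ssum x)) => h; first exact: core_pos.
rewrite -Iset_cpl; apply: core_pos; rewrite Ssum_cpl.
have : Ssum x < 1/2 by rewrite lt_neqAle hne h.
lra.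
Qed.


Definition Tab (ab : 'I_s.+1 * 'I_(n - s).+1) : R := (ab.1 : nat)%:R * pL + (ab.2 : nat)%:R * pS.
Definition Fab ab := Num.max (Tab ab) (1 - Tab ab).
Definition Rk (v : R) : nat := #|[set ab | Fab ab < v]|.
Definition abx x : 'I_s.+1 * 'I_(n - s).+1 := (inord (acnt x), inord (bcnt x)).

Lemma Fab_abx x : Fab (abx x) = f x.
Proof.
have h1 := card_large_split x; have h2 := card_small_split x.
have ha : (acnt x < s.+1)%N by rewrite ltnS; lia.
have hb : (bcnt x < (n - s).+1)%N by rewrite ltnS; lia.
by rewrite f_S Ssum_ab /Fab /Tab /abx /= !inordK.
Qed.

Lemma Rk_drop x y : f y < f x -> (Rk (f y) < Rk (f x))%N.
Proof.
move=> hxy; apply: proper_card; apply/properP; split.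
  apply/subsetP => ab; rewrite !inE => h; exact: lt_trans h hxy.
exists (abx y); by rewrite !inE Fab_abx ?ltxx.
Qed.

Lemma Rk_le v : (Rk v <= s.+1 * (n - s).+1)%N.
Proof.
rewrite /Rk; apply: leq_trans (max_card _) _.
by rewrite card_prod !card_ord.
Qed.

Lemma nonopt x : ~~ is_optimal f x -> Ssum x != 1/2.
Proof.
apply: contra => /eqP h; apply/forallP => y.
rewrite !f_S h.
have -> : 1 - 1/2 = 1/2 :> R by field.
rewrite maxxx le_max; case: (lerP (1/2) (Ssum y)) => // hy.
apply/orP; right; lra.
Qed.

Let G (v : R) : R := (Kc%:R * n%:R) * (Rk v)%:R.

Lemma step_bound x sg : x \in predT ->
  (stop_index f x sg)%:R + G (f (hyp_next f x sg)) <=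
  n%:R + G (f x) - (if sg \in Iset x then Kc%:R * n%:R else 0).
Proof.
move=> _.
have hst : (stop_index f x sg)%:R <= n%:R :> R by rewrite ler_nat stop_le.
have hKn : 0 <= Kc%:R * n%:R :> R by apply: mulr_ge0; apply: ler0n.
case: ifP => hI.
  have hd := Rk_drop (next_improve hI).
  have : (Rk (f (hyp_next f x sg)))%:R <= (Rk (f x))%:R - 1 :> R.
    by rewrite lerBrDr natr1 ler_nat.
  move=> hr.
  have : G (f (hyp_next f x sg)) <= G (f x) - Kc%:R * n%:R.
    rewrite /G; have := ler_wpM2l hKn hr; rewrite mulrBr mulr1 //.
  lra.
rewrite next_same ?hI //; lra.
Qed.

Lemma trunc_bound k x : trunc_time f k x <= G (f x).
Proof.
have hG : forall v, 0 <= G v.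
  by move=> v; rewrite /G; apply: mulr_ge0; [apply: mulr_ge0 | ]; apply: ler0n.
elim: k x => [|k IH] x /=; first exact: hG.
case: ifP => hopt; first exact: hG.
have hc := core (nonopt (negbT hopt)).
rewrite card_Sn.
have hnf : 0 < (n`!)%:R :> R by rewrite ltr0n fact_gt0.
rewrite ler_pdivrMl //.
have h1 : \sum_(sg : {perm 'I_n}) ((stop_index f x sg)%:R + trunc_time f k (hyp_next f x sg))
   <= \sum_(sg : {perm 'I_n}) (n%:R + G (f x) - (if sg \in Iset x then Kc%:R * n%:R else 0)).
  apply: ler_sum => sg _.
  apply: le_trans (@step_bound x sg isT).
  by rewrite lerD2l IH.
apply: le_trans h1 _.
rewrite sumrB sumr_const card_Sn -big_mkcond /= sumr_const.
have hcR : (n`!)%:R <= Kc%:R * (#|Iset x|)%:R :> R by rewrite -natrM ler_nat.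
have h2 : (n`!)%:R * n%:R <= Kc%:R * n%:R * (#|Iset x|)%:R :> R.
  have e : Kc%:R * n%:R * (#|Iset x|)%:R = (Kc%:R * (#|Iset x|)%:R) * n%:R :> R by ring.
  rewrite e; apply: ler_wpM2r; [exact: ler0n | exact: hcR].
rewrite -[_ *+ n`!]mulr_natr -[_ *+ #|Iset x|]mulr_natr.
have -> : (n%:R + G (f x)) * (n`!)%:R = (n`!)%:R * n%:R + (n`!)%:R * G (f x) by ring.
lra.
Qed.

Lemma expected_bound k :
  expected_time_trunc f k <= 1 + Kc%:R * n%:R * (s.+1 * (n - s).+1)%:R.
Proof.
rewrite /expected_time_trunc lerD2l.
have hB : forall x, trunc_time f k x <= Kc%:R * n%:R * (s.+1 * (n - s).+1)%:R.
  move=> x; apply: le_trans (trunc_bound k x) _.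
  rewrite /G; apply: ler_wpM2l; first by apply: mulr_ge0; apply: ler0n.
  by rewrite ler_nat Rk_le.
have h2 : 0 < (2 ^ n)%:R :> R by rewrite ltr0n expn_gt0.
rewrite ler_pdivrMl //.
apply: le_trans (ler_sum _ (fun x _ => hB x)) _.
rewrite sumr_const card_ffun card_bool card_ord -[_ *+ (2 ^ n)]mulr_natr mulrC.
by [].
Qed.

End Reals.

Unset Implicit Arguments.

Theorem theorem4 (R : realType) (s : nat) (eps : R) :
  (2 <= s)%N -> ~~ odd s -> 0 < eps -> eps < 1 / (2 * s%:R - 1) ->
  exists C : R, exists n0 : nat,
    forall n : nat, (n0 <= n)%N -> ~~ odd n ->
      forall k : nat,
        expected_time_trunc (makespan (ptime n s eps)) k <= C * (n%:R) ^+ 2.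
Proof.
move=> hs2 hsev heps0 heps1.
exists ((1 + 2 * Kc s * s.+1)%N)%:R, (8 * s * (s + 1))%N => n hn0 hnev k.
have hn : (2 * s <= n)%N by nia.
apply: le_trans (expected_bound hs2 heps0 heps1 hn hsev hnev hn0 k) _.
have h1 : ((n - s).+1 <= 2 * n)%N by lia.
have h2 : (1 + Kc s * n * (s.+1 * (n - s).+1) <= (1 + 2 * Kc s * s.+1) * n ^ 2)%N.
  have h3 : (Kc s * n * (s.+1 * (n - s).+1) <= Kc s * n * (s.+1 * (2 * n)))%N.
    by rewrite leq_mul2l leq_mul2l h1 !orbT.
  have h4 : (1 <= n ^ 2)%N by rewrite expn_gt0; lia.
  have e : (Kc s * n * (s.+1 * (2 * n)) = 2 * Kc s * s.+1 * n ^ 2)%N.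
    by rewrite expnS expn1; lia.
  rewrite mulnDl mul1n; apply: leq_add => //; by rewrite -e.
have eL : 1 + (Kc s)%:R * n%:R * (s.+1 * (n - s).+1)%:R =
          ((1 + Kc s * n * (s.+1 * (n - s).+1))%N)%:R :> R by rewrite natrD !natrM.
have eR : ((1 + 2 * Kc s * s.+1)%N)%:R * n%:R ^+ 2 =
          (((1 + 2 * Kc s * s.+1) * n ^ 2)%N)%:R :> R by rewrite natrM natrX.
by rewrite eL eR ler_nat.
Qed.
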